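(* Let $X,Y$ be finite sets, $\mu\in\mathcal P(X)$, $\nu\in\mathcal P(Y)$, $M$ a positive integer, and $\pi_1,\pi_2\in\Pi(\mu,\nu)$. Define the assignment graph as the bipartite directed graph on vertex set $X\sqcup Y$ with edge set $\{x\to y:\pi_2(x,y)\ge\mu(x)\nu(y)/M\}\sqcup\{y\to x:\pi_1(x,y)\ge\mu(x)\nu(y)/M\}$. Then: (i) every vertex has at least one incoming and at least one outgoing edge; (ii) if $X_0\subset X$, $Y_0\subset Y$ are such that there is no edge from $X_0\cup Y_0$ to a vertex outside $X_0\cup Y_0$, then $|\mu(X_0)-\nu(Y_0)|<1/M$; the same holds if there is no edge from a vertex outside $X_0\cup Y_0$ into $X_0\cup Y_0$; if moreover $\mu=r/M$, $\nu=s/M$ with $r\in\mathbb Z_{++}^X$, $s\in\mathbb Z_{++}^Y$, then $\mu(X_0)=\nu(Y_0)$; (iii) if $\mu=r/M$, $\nu=s/M$ with $r\in\mathbb Z_{++}^X$, $s\in\mathbb Z_{++}^Y$, and $\{(X_i,Y_i)\}_{i=1}^R$ are the vertex sets of the strongly connected components of the assignment graph (each $X_i\subset X$, $Y_i\subset Y$), then $\{X_i\}_{i=1}^R$ and $\{Y_i\}_{i=1}^R$ are partitions of $X$ and $Y$ and $\mu(X_i)=\nu(Y_i)$ for $i=1,\dots,R$.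
   Context: $\Pi(\mu,\nu)=\{\pi\in\mathbb R_+^{X\times Y}:\sum_y\pi(x,y)=\mu(x)\ \forall x,\ \sum_x\pi(x,y)=\nu(y)\ \forall y\}$. For $A\subset X$, $\mu(A)=\sum_{x\in A}\mu(x)$. $\mathbb Z_{++}$ denotes strictly positive integers. *)

(* Defs.v *)
From HB Require Import structures.
From mathcomp Require Import all_boot all_order all_algebra.
Set Implicit Arguments. Unset Strict Implicit. Unset Printing Implicit Defensive.
Import Order.TTheory GRing.Theory Num.Theory.
Local Open Scope ring_scope.

Section Defs.
Variable R : realFieldType.

Definition is_prob (X : finType) (mu : X -> R) : Prop :=
  (forall x, 0 <= mu x) /\ \sum_(x : X) mu x = 1.

Definition mass (X : finType) (mu : X -> R) (A : {set X}) : R :=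
  \sum_(x in A) mu x.

Definition coupling (X Y : finType) (mu : X -> R) (nu : Y -> R)
    (pi : X -> Y -> R) : Prop :=
  [/\ forall x y, 0 <= pi x y,
      forall x, \sum_(y : Y) pi x y = mu x &
      forall y, \sum_(x : X) pi x y = nu y].

Definition assign_edge (X Y : finType) (mu : X -> R) (nu : Y -> R) (M : nat)
    (pi1 pi2 : X -> Y -> R) : rel (X + Y)%type :=
  fun u v =>
    match u, v with
    | inl x, inr y => mu x * nu y / M%:R <= pi2 x y
    | inr y, inl x => mu x * nu y / M%:R <= pi1 x y
    | _, _ => false
    end.
End Defs.

Definition vset (X Y : finType) (X0 : {set X}) (Y0 : {set Y}) : {set (X + Y)%type} :=
  [set u | match u with inl x => x \in X0 | inr y => y \in Y0 end].

Definition xpart (X Y : finType) (C : {set (X + Y)%type}) : {set X} :=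
  [set x | inl x \in C].
Definition ypart (X Y : finType) (C : {set (X + Y)%type}) : {set Y} :=
  [set y | inr y \in C].

Definition scc (T : finType) (e : rel T) (v : T) : {set T} :=
  [set w | connect e v w && connect e w v].
Definition sccs (T : finType) (e : rel T) : {set {set T}} :=
  [set scc e v | v : T].

(* Main.v *)
Require Import Defs.
From HB Require Import structures.
From mathcomp Require Import all_boot all_order all_algebra.
From mathcomp Require Import lra.
Import Order.TTheory GRing.Theory Num.Theory.
Local Open Scope ring_scope.

Set Implicit Arguments.
Section H.
Variable R : realFieldType.

Lemma splitC (T : finType) (B : {set T}) (F : T -> R) :
  \sum_(y : T) F y = \sum_(y in B) F y + \sum_(y in ~: B) F y.
Proof.
rewrite (bigID (mem B)) /=; congr (_ + _); apply: eq_bigl => y //.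
by rewrite in_setC.
Qed.

Lemma splitS (T : finType) (A B : {set T}) (F : T -> R) :
  \sum_(y in A) F y = \sum_(y in A :&: B) F y + \sum_(y in A :\: B) F y.
Proof.
rewrite (bigID (mem B)) /=; congr (_ + _); apply: eq_bigl => y /=.
  by rewrite in_setI.
by rewrite in_setD andbC.
Qed.

Lemma cpl_diff (X Y : finType) (mu : X -> R) (nu : Y -> R) pi
  (A : {set X}) (B : {set Y}) :
  coupling mu nu pi ->
  mass mu A - mass nu B =
  \sum_(x in A) \sum_(y in ~: B) pi x y - \sum_(x in ~: A) \sum_(y in B) pi x y.
Proof.
case=> _ Hx Hy; rewrite /mass.
have -> : \sum_(x in A) mu x = \sum_(x in A) (\sum_(y in B) pi x y + \sum_(y in ~: B) pi x y).
  by apply: eq_bigr => x _; rewrite -Hx -splitC.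
have -> : \sum_(y in B) nu y = \sum_(x : X) \sum_(y in B) pi x y.
  by rewrite exchange_big /=; apply: eq_bigr => y _; rewrite Hy.
rewrite big_split /= (@splitC _ A (fun x => \sum_(y in B) pi x y)).
lra.
Qed.

Lemma mass_le1 (X : finType) (mu : X -> R) (A : {set X}) :
  is_prob mu -> 0 <= mass mu A <= 1.
Proof.
case=> H0 H1; rewrite /mass.
have a : 0 <= \sum_(x in A) mu x by apply: sumr_ge0.
have b : 0 <= \sum_(x in ~: A) mu x by apply: sumr_ge0.
move: H1; rewrite (@splitC _ A) => H1.
apply/andP; split; lra.
Qed.

Lemma bound (X Y : finType) (mu : X -> R) (nu : Y -> R) pi (M : nat)
  (A : {set X}) (B : {set Y}) :
  is_prob mu -> is_prob nu -> (0 < M)%N -> coupling mu nu pi ->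
  (forall x y, x \in A -> y \in B -> pi x y < mu x * nu y / M%:R) ->
  \sum_(x in A) \sum_(y in B) pi x y < 1 / M%:R.
Proof.
move=> Pm Pn HM [Hp _ _] H.
have HM' : 0 < M%:R :> R by rewrite ltr0n.
have [A0|[x0 xA]] := set_0Vmem A.
  by rewrite A0 big_set0 divr_gt0.
have [B0|[y0 yB]] := set_0Vmem B.
  by rewrite B0 (eq_bigr (fun=> 0)) ?big1 ?divr_gt0 // => x _; rewrite big_set0.
apply: (@lt_le_trans _ _ (\sum_(x in A) \sum_(y in B) (mu x * nu y / M%:R))).
  apply: ltr_sum; first by apply/hasP; exists x0; rewrite ?mem_index_enum.
  move=> x xA'; apply: ltr_sum; first by apply/hasP; exists y0; rewrite ?mem_index_enum.
  by move=> y yB'; apply: H.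
have -> : \sum_(x in A) \sum_(y in B) (mu x * nu y / M%:R) = mass mu A * mass nu B / M%:R.
  rewrite /mass mulr_suml mulr_suml; apply: eq_bigr => x _.
  rewrite mulr_sumr mulr_suml; apply: eq_bigr => y _; by [].
apply: ler_pM; [|by rewrite invr_ge0 ltW| |by []].
  by have /andP[a _] := @mass_le1 _ mu A Pm; have /andP[b _] := @mass_le1 _ nu B Pn; apply: mulr_ge0.
by have /andP[a c] := @mass_le1 _ mu A Pm; have /andP[b d] := @mass_le1 _ nu B Pn; rewrite -(mulr1 1) ler_pM.
Qed.

Lemma psum_ge0 (X Y : finType) (pi : X -> Y -> R) (A : {set X}) (B : {set Y}) :
  (forall x y, 0 <= pi x y) -> 0 <= \sum_(x in A) \sum_(y in B) pi x y.
Proof. by move=> H; apply: sumr_ge0 => x _; apply: sumr_ge0. Qed.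


Lemma natdiff (a b : nat) (M : nat) : (0 < M)%N ->
  `|a%:R / M%:R - b%:R / M%:R| < 1 / M%:R :> R -> a = b.
Proof.
move=> HM; have HM' : 0 < M%:R :> R by rewrite ltr0n.
rewrite -mulrBl normrM (gtr0_norm (x:=M%:R^-1)) ?invr_gt0 // ltr_pM2r ?invr_gt0 //.
case: (ltngtP a b) => // h.
  have : (a.+1)%:R <= b%:R :> R by rewrite ler_nat.
  rewrite -natr1; move: (a%:R : R) (b%:R : R) => u v h1.
  rewrite ltr_norml => /andP[h2 h3]; exfalso; lra.
have : (b.+1)%:R <= a%:R :> R by rewrite ler_nat.
rewrite -natr1; move: (a%:R : R) (b%:R : R) => u v h1.
rewrite ltr_norml => /andP[h2 h3]; exfalso; lra.
Qed.

Lemma mass_nat (X : finType) (mu : X -> R) (r : X -> nat) (M : nat) (A : {set X}) :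
  (forall x, mu x = (r x)%:R / M%:R) ->
  mass mu A = (\sum_(x in A) r x)%:R / M%:R.
Proof.
move=> H; rewrite /mass natr_sum mulr_suml; apply: eq_bigr => x _; exact: H.
Qed.


Lemma exists_ge (T : finType) (F G : T -> R) :
  (exists t : T, true) -> \sum_i G i <= \sum_i F i -> exists i, G i <= F i.
Proof.
move=> [t _] H.
have [/existsP[i h]|/existsPn h] := boolP [exists i, G i <= F i]; first by exists i.
exfalso; have : \sum_i F i < \sum_i G i.
  apply: ltr_sum; first by apply/hasP; exists t; rewrite ?mem_index_enum.
  by move=> i _; rewrite ltNge; apply: h.
by rewrite ltNge H.
Qed.

Lemma div_le (a : R) (M : nat) : (0 < M)%N -> 0 <= a -> a / M%:R <= a.
Proof.
move=> HM Ha; rewrite ler_pdivrMr ?ltr0n //; apply: ler_peMr => //.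
by rewrite ler1n.
Qed.

Lemma nonempty_of_prob (T : finType) (mu : T -> R) : is_prob mu -> exists t : T, true.
Proof.
case=> _ H; case: (pickP (fun _ : T => true)) => [t _|h]; first by exists t.
by move: H; rewrite big_pred0 // => /eqP; rewrite eq_sym oner_eq0.
Qed.

Lemma row_ge (X Y : finType) (mu : X -> R) (nu : Y -> R) pi (M : nat) x :
  is_prob mu -> is_prob nu -> (0 < M)%N -> coupling mu nu pi ->
  exists y, mu x * nu y / M%:R <= pi x y.
Proof.
move=> Pm Pn HM [H0 Hx Hy].
have [y hy] : exists y, mu x * nu y <= pi x y.
  apply: (@exists_ge _ (pi x) (fun y => mu x * nu y)); first exact: (@nonempty_of_prob _ _ Pn).
  by rewrite Hx -mulr_sumr (proj2 Pn) mulr1.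
exists y; apply: le_trans hy; apply: div_le => //.
by apply: mulr_ge0; [apply: (proj1 Pm)|apply: (proj1 Pn)].
Qed.

Lemma col_ge (X Y : finType) (mu : X -> R) (nu : Y -> R) pi (M : nat) y :
  is_prob mu -> is_prob nu -> (0 < M)%N -> coupling mu nu pi ->
  exists x, mu x * nu y / M%:R <= pi x y.
Proof.
move=> Pm Pn HM [H0 Hx Hy].
have [x hx] : exists x, mu x * nu y <= pi x y.
  apply: (@exists_ge _ (pi^~ y) (fun x => mu x * nu y)); first exact: (@nonempty_of_prob _ _ Pm).
  by rewrite Hy -mulr_suml (proj2 Pm) mul1r.
exists x; apply: le_trans hx; apply: div_le => //.
by apply: mulr_ge0; [apply: (proj1 Pm)|apply: (proj1 Pn)].
Qed.

End H.

Lemma scc_eq (T : finType) (e : rel T) v w : w \in scc e v -> scc e v = scc e w.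
Proof.
rewrite inE => /andP[vw wv]; apply/setP => z; rewrite !inE.
apply/andP/andP => [[a b]|[a b]]; split.
- exact: connect_trans wv a.
- exact: connect_trans b vw.
- exact: connect_trans vw a.
- exact: connect_trans b wv.
Qed.

Unset Implicit Arguments.
Theorem mainTheorem7 (R : realFieldType) (X Y : finType)
  (mu : X -> R) (nu : Y -> R) (M : nat) (pi1 pi2 : X -> Y -> R) :
  is_prob mu -> is_prob nu -> (0 < M)%N ->
  coupling mu nu pi1 -> coupling mu nu pi2 ->
  let e := assign_edge mu nu M pi1 pi2 in
  (* (i) *)
  (forall v, (exists u, e u v) /\ (exists w, e v w)) /\
  (* (ii) *)
  (forall (X0 : {set X}) (Y0 : {set Y}),
     let S := vset X0 Y0 in
     (forall u v, u \in S -> e u v -> v \in S) \/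
     (forall u v, v \in S -> e u v -> u \in S) ->
     `|mass mu X0 - mass nu Y0| < 1 / M%:R /\
     (forall (r : X -> nat) (s : Y -> nat),
        (forall x, (0 < r x)%N) -> (forall y, (0 < s y)%N) ->
        (forall x, mu x = (r x)%:R / M%:R) ->
        (forall y, nu y = (s y)%:R / M%:R) ->
        mass mu X0 = mass nu Y0)) /\
  (* (iii) *)
  (forall (r : X -> nat) (s : Y -> nat),
     (forall x, (0 < r x)%N) -> (forall y, (0 < s y)%N) ->
     (forall x, mu x = (r x)%:R / M%:R) ->
     (forall y, nu y = (s y)%:R / M%:R) ->
     partition [set xpart C | C in sccs e] [set: X] /\
     partition [set ypart C | C in sccs e] [set: Y] /\
     (forall C, C \in sccs e -> mass mu (xpart C) = mass nu (ypart C))).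
Proof.
move=> Pm Pn HM C1 C2 e.
have HM' : 0 < M%:R :> R by rewrite ltr0n.
have partI : forall v, (exists u, e u v) /\ (exists w, e v w).
  case=> [x|y]; split.
  - have [y hy] := row_ge M x Pm Pn HM C1; by exists (inr y).
  - have [y hy] := row_ge M x Pm Pn HM C2; by exists (inr y).
  - have [x hx] := col_ge M y Pm Pn HM C2; by exists (inl x).
  - have [x hx] := col_ge M y Pm Pn HM C1; by exists (inl x).
have partII : forall (X0 : {set X}) (Y0 : {set Y}),
     let S := vset X0 Y0 in
     (forall u v, u \in S -> e u v -> v \in S) \/
     (forall u v, v \in S -> e u v -> u \in S) ->
     `|mass mu X0 - mass nu Y0| < 1 / M%:R /\
     (forall (r : X -> nat) (s : Y -> nat),
        (forall x, (0 < r x)%N) -> (forall y, (0 < s y)%N) ->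
        (forall x, mu x = (r x)%:R / M%:R) ->
        (forall y, nu y = (s y)%:R / M%:R) ->
        mass mu X0 = mass nu Y0).
  move=> X0 Y0 S hor.
  have D1 := cpl_diff X0 Y0 C1; have D2 := cpl_diff X0 Y0 C2.
  have a1 := @psum_ge0 R X Y pi1 X0 (~: Y0) (let: And3 h _ _ := C1 in h).
  have b1 := @psum_ge0 R X Y pi1 (~: X0) Y0 (let: And3 h _ _ := C1 in h).
  have a2 := @psum_ge0 R X Y pi2 X0 (~: Y0) (let: And3 h _ _ := C2 in h).
  have b2 := @psum_ge0 R X Y pi2 (~: X0) Y0 (let: And3 h _ _ := C2 in h).
  have inSl : forall x, (inl x \in S) = (x \in X0) by move=> x; rewrite /S /vset !inE.
  have inSr : forall y, (inr y \in S) = (y \in Y0) by move=> y; rewrite /S /vset !inE.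
  have key : `|mass mu X0 - mass nu Y0| < 1 / M%:R.
    rewrite ltr_norml; apply/andP.
    case: hor => [hout|hin].
    + have A2 : \sum_(x in X0) \sum_(y in ~: Y0) pi2 x y < 1 / M%:R.
        apply: (bound M Pm Pn HM C2) => x y xX yY; rewrite ltNge; apply/negP => E.
        have := hout (inl x) (inr y); rewrite inSl inSr => /(_ xX E).
        by rewrite in_setC in yY; rewrite (negbTE yY).
      have B1 : \sum_(x in ~: X0) \sum_(y in Y0) pi1 x y < 1 / M%:R.
        apply: (bound M Pm Pn HM C1) => x y xX yY; rewrite ltNge; apply/negP => E.
        have := hout (inr y) (inl x); rewrite inSl inSr => /(_ yY E).
        by rewrite in_setC in xX; rewrite (negbTE xX).
      split; lra.
    + have A1 : \sum_(x in X0) \sum_(y in ~: Y0) pi1 x y < 1 / M%:R.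
        apply: (bound M Pm Pn HM C1) => x y xX yY; rewrite ltNge; apply/negP => E.
        have := hin (inr y) (inl x); rewrite inSl inSr => /(_ xX E).
        by rewrite in_setC in yY; rewrite (negbTE yY).
      have B2 : \sum_(x in ~: X0) \sum_(y in Y0) pi2 x y < 1 / M%:R.
        apply: (bound M Pm Pn HM C2) => x y xX yY; rewrite ltNge; apply/negP => E.
        have := hin (inl x) (inr y); rewrite inSl inSr => /(_ yY E).
        by rewrite in_setC in xX; rewrite (negbTE xX).
      split; lra.
  split => // r s _ _ hr hs.
  rewrite (@mass_nat R X mu r M X0 hr) (@mass_nat R Y nu s M Y0 hs); congr (_%:R / _).
  apply: (@natdiff R _ _ M HM); by rewrite -(@mass_nat R X mu r M X0 hr) -(@mass_nat R Y nu s M Y0 hs).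
split => //; split => //.
move=> r s hr0 hs0 hr hs.
have closed_mass : forall S : {set (X + Y)%type},
    (forall u v, u \in S -> e u v -> v \in S) -> mass mu (xpart S) = mass nu (ypart S).
  move=> S hS.
  have ES : vset (xpart S) (ypart S) = S.
    by apply/setP => -[x|y]; rewrite /vset /xpart /ypart !inE.
  have [|_ H] := partII (xpart S) (ypart S); first by left; rewrite /= ES.
  exact: H r s hr0 hs0 hr hs.
have scc_mass : forall v, mass mu (xpart (scc e v)) = mass nu (ypart (scc e v)).
  move=> v.
  pose D := [set w | connect e v w].
  pose D' := [set w | connect e v w && ~~ connect e w v].
  have cD : forall u w, u \in D -> e u w -> w \in D.
    move=> u w; rewrite !inE => vu uw; exact: connect_trans vu (connect1 uw).
  have cD' : forall u w, u \in D' -> e u w -> w \in D'.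
    move=> u w; rewrite !inE => /andP[vu nuv] uw.
    rewrite (connect_trans vu (connect1 uw)) /=; apply/negP => wv.
    by move/negP: nuv; apply; exact: connect_trans (connect1 uw) wv.
  have mD := closed_mass D cD; have mD' := closed_mass D' cD'.
  have EI : forall (T : finType) (f : T -> X + Y),
      [set t | f t \in D] :&: [set t | f t \in D'] = [set t | f t \in D'].
    move=> T f; apply/setP => t; rewrite !inE.
    by case: (connect e v (f t)).
  have ED : forall (T : finType) (f : T -> X + Y),
      [set t | f t \in D] :\: [set t | f t \in D'] = [set t | f t \in scc e v].
    move=> T f; apply/setP => t; rewrite !inE.
    by case: (connect e v (f t)); case: (connect e (f t) v).
  have sx := @splitS R X (xpart D) (xpart D') mu.
  have sy := @splitS R Y (ypart D) (ypart D') nu.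
  rewrite /xpart /ypart in sx sy mD mD' *.
  rewrite (EI X inl) (ED X inl) in sx; rewrite (EI Y inr) (ED Y inr) in sy.
  rewrite /mass in mD mD' *.
  move: sx sy mD mD'; set a := \sum_(i in _) _; set b := \sum_(i in _) _.
  set c := \sum_(i in _) _; set d := \sum_(i in _) _.
  set f := \sum_(i in _) _; set g := \sum_(i in _) _.
  move=> *; lra.
have posx : forall A : {set X}, mass mu A = 0 -> A = set0.
  move=> A h; apply/setP => x; rewrite inE; apply/negP => xA.
  have := psumr_eq0P (fun i _ => proj1 Pm i) h xA.
  by rewrite hr => /eqP; rewrite gt_eqF // divr_gt0 // ltr0n.
have posy : forall B : {set Y}, mass nu B = 0 -> B = set0.
  move=> B h; apply/setP => y; rewrite inE; apply/negP => yB.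
  have := psumr_eq0P (fun i _ => proj1 Pn i) h yB.
  by rewrite hs => /eqP; rewrite gt_eqF // divr_gt0 // ltr0n.
have inscc : forall v, v \in scc e v by move=> v; rewrite inE connect0.
have mem_sccs : forall v, scc e v \in sccs e by move=> v; apply/imsetP; exists v.
have both : forall v, xpart (scc e v) != set0 /\ ypart (scc e v) != set0.
  move=> v; have := scc_mass v.
  have [Ex|[x xx]] := set_0Vmem (xpart (scc e v)).
    rewrite Ex /mass big_set0 => /esym/posy Ey.
    case: v Ex Ey => [x|y] Ex Ey.
    + have : x \in xpart (scc e (inl x)) by rewrite inE inscc.
      by rewrite Ex inE.
    + have : y \in ypart (scc e (inr y)) by rewrite inE inscc.
      by rewrite Ey inE.
  have [Ey|[y yy]] := set_0Vmem (ypart (scc e v)).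
    rewrite Ey /mass big_set0 => /posx Ex.
    by move: xx; rewrite Ex inE.
  by move=> _; split; apply/set0Pn; [exists x|exists y].
split; [|split].
- rewrite /partition; apply/and3P; split.
  + apply/eqP/setP => x; rewrite inE; apply/bigcupP.
    exists (xpart (scc e (inl x))); first by apply/imsetP; exists (scc e (inl x)).
    by rewrite inE inscc.
  + apply/trivIsetP => A B /imsetP[K1 /imsetP[v1 _ ->] ->] /imsetP[K2 /imsetP[v2 _ ->] ->] neq.
    apply/pred0P => x /=; apply/negbTE/negP => /andP[h1 h2].
    move: h1 h2; rewrite [x \in _]inE [x \in _]inE => h1 h2.
    by move/negP: neq; apply; rewrite (scc_eq h1) (scc_eq h2).
  + apply/imsetP => -[C /imsetP[v _ ->] E].
    by have [h _] := both v; rewrite -E eqxx in h.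
- rewrite /partition; apply/and3P; split.
  + apply/eqP/setP => y; rewrite inE; apply/bigcupP.
    exists (ypart (scc e (inr y))); first by apply/imsetP; exists (scc e (inr y)).
    by rewrite inE inscc.
  + apply/trivIsetP => A B /imsetP[K1 /imsetP[v1 _ ->] ->] /imsetP[K2 /imsetP[v2 _ ->] ->] neq.
    apply/pred0P => y /=; apply/negbTE/negP => /andP[h1 h2].
    move: h1 h2; rewrite [y \in _]inE [y \in _]inE => h1 h2.
    by move/negP: neq; apply; rewrite (scc_eq h1) (scc_eq h2).
  + apply/imsetP => -[C /imsetP[v _ ->] E].
    by have [_ h] := both v; rewrite -E eqxx in h.
- by move=> C /imsetP[v _ ->]; exact: scc_mass.
Qed.
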